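(* Let $d\ge3$, $h\ge1$, and let $\mathbf{x}_0$ be the standard basis vector of $\mathbb{Z}^V$ corresponding to the root $0$. Then the order of the image $\bar{\mathbf{x}}_0$ of $\mathbf{x}_0$ in $G(d,h)$ is $d(d-1)^h$.
   Context: Let $\mathcal{T}(d,h)$ be the rooted tree in which the root $0$ has $d$ children, every vertex at distance $1,\dots,h-1$ from the root has $d-1$ children, and the vertices at distance $h$ are leaves. Let $V$ be its vertex set, $A$ its adjacency matrix, $\Delta := dI-A$, and $\Lambda\subset\mathbb{Z}^V$ the lattice spanned by the rows of $\Delta$. Then $G(d,h):=\mathbb{Z}^V/\Lambda$; for $\mathbf{v}\in\mathbb{Z}^V$, $\bar{\mathbf{v}}$ denotes its image in $G(d,h)$. $\{\mathbf{x}_i:i\in V\}$ is the standard basis of $\mathbb{Z}^V$. *)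

(* Defs.v *)
From HB Require Import structures.
From mathcomp Require Import all_boot all_order all_algebra.
Set Implicit Arguments. Unset Strict Implicit. Unset Printing Implicit Defensive.
Import Order.TTheory GRing.Theory Num.Theory.
Local Open Scope ring_scope.

(* A vertex of T(d,h) is encoded by the path of child-indices from the root:
   the root is [::]; a vertex at depth k >= 1 is a list [a1; ...; ak] with
   a1 < d (the root has d children) and a2,...,ak < d-1 (every other
   non-leaf vertex has d-1 children), k <= h. *)

Fixpoint tpaths (c k : nat) : seq (seq nat) :=
  if k is k'.+1 then [::] :: [seq a :: s | a <- iota 0 c, s <- tpaths c k']
  else [:: [::]].

Definition tree_vertices (d h : nat) : seq (seq nat) :=
  [::] :: (if h is h'.+1 then [seq a :: s | a <- iota 0 d, s <- tpaths d.-1 h']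
           else [::]).

Definition tvert (d h : nat) : finType := seq_sub (tree_vertices d h).

Definition troot (d h : nat) : tvert d h :=
  SeqSub (mem_head ([::] : seq nat) _).

Definition tparent (s t : seq nat) : bool :=
  (size t == (size s).+1) && (take (size s) t == s).
Definition tadj d h (u v : tvert d h) : bool :=
  tparent (ssval u) (ssval v) || tparent (ssval v) (ssval u).

Definition tDelta d h (u v : tvert d h) : int :=
  (d%:Z * (u == v)%:Z) - (tadj u v)%:Z.

Definition inLambda d h (x : tvert d h -> int) : Prop :=
  exists c : tvert d h -> int, forall j, x j = \sum_(i : tvert d h) c i * tDelta i j.

Definition stdvec d h (i : tvert d h) : tvert d h -> int := fun j => (i == j)%:Z.

Definition order_in_G d h (x : tvert d h -> int) (n : nat) : Prop :=
  (0 < n)%N /\ inLambda (fun j => n%:Z * x j) /\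
  forall m : nat, (0 < m < n)%N -> ~ inLambda (fun j => m%:Z * x j).

(* Main.v *)
Require Import Defs.
From mathcomp Require Import all_boot all_order all_algebra.
From mathcomp Require Import zify ring lra.
Set Implicit Arguments. Unset Strict Implicit. Unset Printing Implicit Defensive.
Import Order.TTheory GRing.Theory Num.Theory.
Local Open Scope ring_scope.

Lemma mem_consp (A : seq nat) (B : seq (seq nat)) s :
  (s \in [seq a :: t | a <- A, t <- B]) =
  (if s is a :: t then (a \in A) && (t \in B) else false).
Proof.
apply/allpairsP/idP.
- by case=> [[a t] /= [Ha Ht ->]]; rewrite Ha Ht.
- case: s => [//|a t] /andP [Ha Ht]; by exists (a, t).
Qed.

Lemma mem_tpaths c k s :
  (s \in tpaths c k) = (size s <= k)%N && all (fun b => b < c)%N s.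
Proof.
elim: k s => [|k IH] [|a t] //=.
rewrite in_cons /= mem_consp mem_iota /= add0n IH ltnS.
by rewrite andbCA andbA.
Qed.

Definition ent d (s : seq nat) :=
  if s is a :: t then (a < d)%N && all (fun b => b < d.-1)%N t else true.

Lemma mem_tv d h s :
  (s \in tree_vertices d h) = (size s <= h)%N && ent d s.
Proof.
case: h => [|h]; case: s => [|a t] //=.
by rewrite in_cons /= mem_consp mem_iota /= add0n mem_tpaths ltnS andbCA andbA.
Qed.

Definition vtx d h (s : seq nat) : tvert d h := insubd (troot d h) s.

Lemma val_vtx d h s : s \in tree_vertices d h -> ssval (vtx d h s) = s.
Proof. by move=> H; rewrite /vtx insubdK. Qed.

Lemma sum_list d h (P : pred (seq nat)) (x : tvert d h -> int) (r : seq (seq nat)) :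
  uniq r -> (forall y, (y \in r) = P y && (y \in tree_vertices d h)) ->
  \sum_(i | P (ssval i)) x i = \sum_(y <- r) x (vtx d h y).
Proof.
move=> Ur Hr.
have Hperm : perm_eq r (map (@ssval _ _) [seq i <- enum (tvert d h) | P (ssval i)]).
  apply: uniq_perm => //.
    rewrite map_inj_uniq; first by rewrite filter_uniq //; exact: (enum_uniq (tvert d h)).
    move=> a b E; apply: val_inj; exact: E.
  move=> y; rewrite Hr; apply/idP/mapP.
    move=> /andP[Py Hy]; exists (SeqSub Hy) => //.
    by rewrite mem_filter mem_enum /= Py.
  by case=> i; rewrite mem_filter => /andP[Pi _] ->; rewrite Pi ssvalP.
rewrite (perm_big _ Hperm) big_map big_filter big_enum_cond.
by apply: eq_bigr => i _; rewrite /vtx valKd.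
Qed.

Definition bnd d (s : seq nat) := if s is [::] then d else d.-1.

Lemma ent_rcons d s a : ent d (rcons s a) = ent d s && (a < bnd d s)%N.
Proof. case: s => [|b t] /=; first by rewrite andbT. by rewrite all_rcons -!andbA; congr (_ && _); exact: andbC. Qed.

Lemma take_rcons_size (s : seq nat) a : take (size s) (rcons s a) = s.
Proof. by rewrite -cats1 take_size_cat. Qed.


Lemma tparentP (s y : seq nat) :
  reflect (exists a, y = rcons s a) (tparent s y).
Proof.
rewrite /tparent; apply: (iffP andP).
  case: (lastP y) => [[]|y' a]; first by [].
  rewrite size_rcons eqSS => -[/eqP E /eqP]; rewrite -E take_rcons_size => ->.
  by exists a.
by case=> a ->; rewrite size_rcons take_rcons_size.
Qed.

Lemma children_mem d h (s : seq nat) :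
  s \in tree_vertices d h -> (size s < h)%N ->
  forall y, (y \in [seq rcons s a | a <- iota 0 (bnd d s)]) =
            tparent s y && (y \in tree_vertices d h).
Proof.
rewrite mem_tv => /andP[_ Es] Hs y; apply/mapP/andP.
  case=> a; rewrite mem_iota add0n => /= Ha ->; split; first by apply/tparentP; exists a.
  by rewrite mem_tv size_rcons Hs ent_rcons Es.
case=> /tparentP [a ->]; rewrite mem_tv ent_rcons => /andP[_ /andP[_ Ha]].
by exists a; rewrite // mem_iota add0n.
Qed.

Lemma no_children d h (s : seq nat) :
  s \in tree_vertices d h -> ~~ (size s < h)%N ->
  forall y, tparent s y && (y \in tree_vertices d h) = false.
Proof.
move=> _ Hs y; apply/andP => -[/tparentP [a ->]]; rewrite mem_tv size_rcons.
by case/andP=> H; rewrite H in Hs.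
Qed.

Lemma parent_mem d h (s : seq nat) :
  s \in tree_vertices d h -> (0 < size s)%N ->
  forall y, (y \in [:: take (size s).-1 s]) =
            tparent y s && (y \in tree_vertices d h).
Proof.
case: (lastP s) => [//|s' a]; rewrite mem_tv size_rcons ent_rcons => /andP[Hsz /andP[Es _]] _ y.
rewrite /= take_rcons_size inE; apply/eqP/andP.
  move=> ->; split; first by apply/tparentP; exists a.
  by rewrite mem_tv Es andbT ltnW.
case=> /tparentP [b /eqP]; rewrite eqseq_rcons => /andP[/eqP -> _] _ //.
Qed.

Lemma sum_ind d h (P : pred (seq nat)) (x : tvert d h -> int) :
  \sum_i x i * (P (ssval i))%:Z = \sum_(i | P (ssval i)) x i.
Proof. by rewrite [RHS]big_mkcond; apply: eq_bigr => i _; case: (P _); rewrite ?mulr1 ?mulr0. Qed.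

Lemma sumDelta d h (x : tvert d h -> int) j :
  \sum_i x i * tDelta i j = d%:Z * x j
   - (if (0 < size (ssval j))%N then x (vtx d h (take (size (ssval j)).-1 (ssval j))) else 0)
   - (if (size (ssval j) < h)%N then
        \sum_(a < bnd d (ssval j)) x (vtx d h (rcons (ssval j) a)) else 0).
Proof.
have E1 i : x i * tDelta i j = x i * d%:Z * (i == j)%:Z
     - x i * (tparent (ssval i) (ssval j))%:Z - x i * (tparent (ssval j) (ssval i))%:Z.
  rewrite /tDelta /tadj.
  have : ~~ (tparent (ssval i) (ssval j) && tparent (ssval j) (ssval i)).
    rewrite /tparent; apply/negP => /andP[/andP[/eqP E _] /andP[/eqP F _]].
    lia.
  case: (tparent _ _); case: (tparent _ _) => //= _; rewrite ?mulr0 ?subr0; ring.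
under eq_bigr => i _ do rewrite E1.
rewrite !sumrB !sum_ind (bigD1 j) //= eqxx mulr1.
rewrite big1 ?addr0; last by move=> i /negbTE ->; rewrite mulr0.
rewrite mulrC; congr (_ - _ - _).
  case: ifP => Hs.
    rewrite (sum_ind (fun y => tparent y (ssval j))) (@sum_list _ _ (fun y => tparent y (ssval j)) _ [:: take (size (ssval j)).-1 (ssval j)]) ?big_seq1 //.
    by move=> y; rewrite (parent_mem (ssvalP j) Hs) .
  rewrite (sum_ind (fun y => tparent y (ssval j))); apply: big1 => i; rewrite /tparent; move: Hs; case: (size (ssval j)) => //.
case: ifP => Hs.
  rewrite (@sum_list _ _ _ _ [seq rcons (ssval j) a | a <- iota 0 (bnd d (ssval j))]).
  - by rewrite big_map -(big_mkord xpredT (fun a => x (vtx d h (rcons (ssval j) a)))) /index_iota subn0.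
  - rewrite map_inj_uniq ?iota_uniq //.
    by move=> a b /eqP; rewrite eqseq_rcons => /andP[_ /eqP].
  - by move=> y; rewrite (children_mem (ssvalP j) Hs).
apply: big1 => i Hi; have := no_children (ssvalP j) (negbT Hs) (ssval i).
by rewrite Hi ssvalP.
Qed.

Fixpoint Sd (d n : nat) : int := if n is n'.+1 then 1 + (d%:Z - 1) * Sd d n' else 1.

Lemma Sd_diff d n : Sd d n.+1 - Sd d n = (d%:Z - 1) ^+ n.+1.
Proof.
elim: n => [|n IH]; first by rewrite /= mulr1 expr1; ring.
rewrite exprS -IH /=; ring.
Qed.

Lemma Posz_pred d : (0 < d)%N -> Posz d.-1 = Posz d - 1.
Proof. by case: d => // n _; rewrite /= -addn1 PoszD addrK. Qed.

Lemma vtx_parent d h (j : tvert d h) : (0 < size (ssval j))%N ->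
  ssval (vtx d h (take (size (ssval j)).-1 (ssval j))) = take (size (ssval j)).-1 (ssval j).
Proof.
move=> Hs; apply: val_vtx.
by have := parent_mem (ssvalP j) Hs (take (size (ssval j)).-1 (ssval j)); rewrite mem_head => /esym/andP[].
Qed.

Lemma vtx_child d h (j : tvert d h) (a : nat) : (size (ssval j) < h)%N -> (a < bnd d (ssval j))%N ->
  ssval (vtx d h (rcons (ssval j) a)) = rcons (ssval j) a.
Proof.
move=> Hs Ha; apply: val_vtx.
have := children_mem (ssvalP j) Hs (rcons (ssval j) a).
rewrite map_f ?mem_iota ?add0n // => /esym/andP[] //.
Qed.

Definition xs d h (i : tvert d h) : int := Sd d (h - size (ssval i)).

Lemma bnd_size d (s : seq nat) : bnd d s = if size s == 0%N then d else d.-1.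
Proof. by case: s. Qed.

Lemma xs_eq d h (j : tvert d h) : (3 <= d)%N -> (1 <= h)%N ->
  \sum_i xs i * tDelta i j = (Posz d * (Posz d - 1) ^+ h) * (troot d h == j)%:Z.
Proof.
move=> Hd Hh.
have Hr : (troot d h == j) = (ssval j == [::]) by rewrite -val_eqE eq_sym.
have Hvs := ssvalP j; rewrite mem_tv in Hvs; case/andP: Hvs => Hsz _.
rewrite sumDelta Hr -size_eq0.
have Ht : size (take (size (ssval j)).-1 (ssval j)) = (size (ssval j)).-1.
  by rewrite size_takel // leq_pred.
case: ifP => H1; [rewrite /xs vtx_parent // Ht | rewrite /xs]; (case: ifP => H2; last first);
  try (rewrite (eq_bigr (fun _ => Sd d (h - (size (ssval j)).+1))); last first;
       [by move=> a _; rewrite /xs vtx_child // size_rcons |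
        rewrite sumr_const card_ord -mulr_natl natz bnd_size]);
  set k := size (ssval j) in Hsz H1 H2 *.
- move/negbT: H2; rewrite -leqNgt => H2.
  have -> : (h - k)%N = 0%N by lia.
  have -> : (h - k.-1)%N = 1%N.
    have -> : k = h by lia.
    by case: (h) Hh => // n _; rewrite subSn // subnn.
  have -> : (k == 0%N) = false by case: (k) H1.
  rewrite /= mulr0; ring.
- have -> : (k == 0%N) = false by case: (k) H1.
  rewrite Posz_pred; last by lia.
  set n := (h - k.+1)%N.
  have -> : (h - k)%N = n.+1 by rewrite /n; lia.
  have -> : (h - k.-1)%N = n.+2.
    by rewrite /n; case: (k) H1 H2 => // k' _ /= H2; lia.
  rewrite /= mulr0; ring.
- move/negbT: H2; rewrite -leqNgt => H2; move/negbT: H1; rewrite -leqNgt => H1; lia.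
- move/negbT: H1; rewrite -leqNgt => H1.
  have -> : k = 0%N by lia.
  rewrite /= subn0 mulr1 subr0 -mulrBr.
  case: (h) Hh => // n _; rewrite subSS subn0 Sd_diff //.
Qed.

Lemma kernel_le0 d h (y : tvert d h -> int) : (3 <= d)%N -> (1 <= h)%N ->
  (forall j, \sum_i y i * tDelta i j = 0) -> forall i, y i <= 0.
Proof.
move=> Hd Hh Hy.
have [v _ Hv] := @arg_maxP _ _ _ (troot d h) xpredT y isT.
have Hv' : forall j, y j <= y v by move=> j; exact: (Hv j isT).
move=> i; apply: le_trans (Hv' i) _.
rewrite leNgt; apply/negP => Mpos.
suff: forall n w, (h - size (ssval w))%N = n -> y w = y v -> False by move/(_ _ v erefl erefl).
elim=> [|n IH] w Hn Hw; have := Hy w; rewrite sumDelta.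
  have Hvs := ssvalP w; rewrite mem_tv in Hvs; case/andP: Hvs => Hsz _.
  have H1 : (0 < size (ssval w))%N by lia.
  have H2 : (size (ssval w) < h)%N = false by apply/negbTE; rewrite -leqNgt; lia.
  rewrite H1 H2 subr0 => E.
  have := Hv' (vtx d h (take (size (ssval w)).-1 (ssval w))).
  move: E; rewrite Hw; set M := y v; set P := y (vtx _ _ _) => E HP.
  nia.
have H2 : (size (ssval w) < h)%N by lia.
rewrite H2 Hw => E.
have Hb0 : (0 < bnd d (ssval w))%N by rewrite bnd_size; case: ifP => _; lia.
have HD : y v - y (vtx d h (rcons (ssval w) 0)) <=
          \sum_(a < bnd d (ssval w)) (y v - y (vtx d h (rcons (ssval w) a))).
  rewrite (bigD1 (Ordinal Hb0)) //= lerDl sumr_ge0 // => a _; rewrite subr_ge0; exact: Hv'.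
rewrite sumrB sumr_const card_ord -mulr_natl natz in HD.
have HF0 := Hv' (vtx d h (rcons (ssval w) 0)).
have Hbv : Posz (bnd d (ssval w)) =
    if size (ssval w) == 0%N then Posz d else Posz d - 1.
  by rewrite bnd_size; case: ifP => _ //; rewrite Posz_pred //; lia.
have HP := Hv' (vtx d h (take (size (ssval w)).-1 (ssval w))).
have Hc : y (vtx d h (rcons (ssval w) 0)) = y v.
  move: HD E HF0 HP; rewrite Hbv.
  set C := \sum_(a < bnd d (ssval w)) _.
  set F0 := y (vtx _ _ (rcons _ _)); set M := y v; set P := y (vtx _ _ (take _ _)).
  have [Hk0|Hkpos] := eqVneq (size (ssval w)) 0%N.
  - rewrite Hk0 /= => HD E HF0 HP; nia.
  - rewrite lt0n Hkpos => HD E HF0 HP; nia.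
apply: (IH _ _ Hc).
by rewrite vtx_child // size_rcons subnS Hn.
Qed.

Lemma PoszN d h : (1 <= d)%N ->
  Posz (d * (d - 1) ^ h)%N = Posz d * (Posz d - 1) ^+ h.
Proof.
move=> Hd; rewrite PoszM; congr (_ * _).
elim: h => [|h IH]; first by rewrite expn0 expr0.
by rewrite expnS exprS PoszM IH subn1 Posz_pred.
Qed.

Theorem proposition7p2 (d h : nat) :
  (3 <= d)%N -> (1 <= h)%N ->
  order_in_G (stdvec (troot d h)) (d * (d - 1) ^ h)%N.
Proof.
move=> Hd Hh.
have HN := PoszN h (ltnW (ltnW Hd)).
split.
  rewrite muln_gt0 expn_gt0; apply/andP; split; first lia.
  by apply/orP; left; lia.
split.
  by exists (@xs d h) => j; rewrite xs_eq // HN.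
move=> m /andP[Hm0 HmN] [c Hc].
set N := (d * (d - 1) ^ h)%N in HN HmN Hc.
pose y i := Posz N * c i - Posz m * xs i.
have Hy : forall j, \sum_i y i * tDelta i j = 0.
  move=> j; rewrite /y.
  under eq_bigr => i _ do rewrite mulrBl -!mulrA.
  rewrite sumrB -!mulr_sumr -Hc xs_eq // -HN /stdvec; ring.
have Hy' : forall j, \sum_i (- y i) * tDelta i j = 0.
  move=> j; under eq_bigr => i _ do rewrite mulNr.
  by rewrite sumrN Hy oppr0.
have H0 i : y i = 0.
  apply: le_anti; rewrite (kernel_le0 Hd Hh Hy i) /=.
  by rewrite -oppr_le0 (kernel_le0 Hd Hh Hy' i).
have Hl : ssval (vtx d h (nseq h 0%N)) = nseq h 0%N.
  apply: val_vtx; rewrite mem_tv size_nseq leqnn /=.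
  case: (h) Hh => // k _ /=; apply/andP; split; first lia.
  by apply/allP => b /nseqP [-> _]; lia.
have := H0 (vtx d h (nseq h 0%N)); rewrite /y /xs Hl size_nseq subnn /= mulr1.
set C := c _ => E.
clear y Hy Hy' H0 Hl; clearbody N C; have [HC|HC] : (0 < C) \/ (C <= 0) by lia.
- have : Posz N * 1 <= Posz N * C by rewrite ler_pM2l //; lia.
  lia.
- have : Posz N * C <= 0 by rewrite pmulr_rle0 //; lia.
  lia.
Qed.
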